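(* Let $H$ be a Hilbert space with $\dim H\ge2$ and let $1<p<\infty$, $p\neq2$. An element $x=(x_k)\in\ell^p(H)$ is a left symmetric point (respectively, a right symmetric point) of $\ell^p(H)$ if and only if there exist an index $n$ and $h\in H$ such that $x_n=h$ and $x_k=0$ for all $k\neq n$.
   Context: $\ell^p(H)$ is the space of sequences $(x_k)_{k\in\mathbb{N}}$ in $H$ with $\|(x_k)\|_p=(\sum_k\|x_k\|^p)^{1/p}<\infty$. In a normed space $Y$ over $\mathbb{K}$, $x\perp_{BJ}y$ means $\|x+\lambda y\|\ge\|x\|$ for all $\lambda\in\mathbb{K}$; $x$ is a left symmetric point if $x\perp_{BJ}y$ implies $y\perp_{BJ}x$ for all $y$, and a right symmetric point if $y\perp_{BJ}x$ implies $x\perp_{BJ}y$ for all $y$. *)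

(* Defs.v *)
From HB Require Import structures.
From mathcomp Require Import all_boot all_order all_algebra.
From mathcomp Require Import all_classical all_reals all_analysis.
From mathcomp Require Import complex.
Set Implicit Arguments. Unset Strict Implicit. Unset Printing Implicit Defensive.
Import Order.TTheory GRing.Theory Num.Theory numFieldNormedType.Exports.
Local Open Scope ring_scope.

(* Scalar field K (R or C = R[i]) described through its real-part map [re]
   and its conjugation [cj]. Norms are real-valued (in R : realType). *)
Section Hilbert.
Variables (R : realType) (K : fieldType) (re : K -> R) (cj : K -> K).
Variable V : lmodType K.

Definition is_inner_product (ip : V -> V -> K) : Prop :=
  [/\ (forall (a : K) (x y z : V), ip (a *: x + y) z = a * ip x z + ip y z),
      (forall x y : V, ip y x = cj (ip x y)),
      (forall x : V, 0 <= re (ip x x)) &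
      (forall x : V, ip x x = 0 -> x = 0)].

Definition ipnorm (ip : V -> V -> K) (x : V) : R := Num.sqrt (re (ip x x)).

Definition ip_complete (ip : V -> V -> K) : Prop :=
  forall u : nat -> V,
    (forall e : R, 0 < e -> exists N : nat, forall m n : nat,
        (N <= m)%N -> (N <= n)%N -> ipnorm ip (u m - u n) < e) ->
    exists l : V, forall e : R, 0 < e -> exists N : nat, forall n : nat,
        (N <= n)%N -> ipnorm ip (u n - l) < e.

Definition is_Hilbert (ip : V -> V -> K) : Prop :=
  is_inner_product ip /\ ip_complete ip.

Definition dim_ge2 : Prop :=
  exists x y : V, forall a b : K, a *: x + b *: y = 0 -> a = 0 /\ b = 0.

Definition in_lp (ip : V -> V -> K) (p : R) (x : nat -> V) : Prop :=
  cvgn (series (fun k => powR (ipnorm ip (x k)) p)).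

Definition lpnorm (ip : V -> V -> K) (p : R) (x : nat -> V) : R :=
  powR (limn (series (fun k => powR (ipnorm ip (x k)) p))) p^-1.

Definition BJ_orth (ip : V -> V -> K) (p : R) (x y : nat -> V) : Prop :=
  forall l : K, lpnorm ip p x <= lpnorm ip p (fun k => x k + l *: y k).

Definition left_symmetric (ip : V -> V -> K) (p : R) (x : nat -> V) : Prop :=
  forall y, in_lp ip p y -> BJ_orth ip p x y -> BJ_orth ip p y x.

Definition right_symmetric (ip : V -> V -> K) (p : R) (x : nat -> V) : Prop :=
  forall y, in_lp ip p y -> BJ_orth ip p y x -> BJ_orth ip p x y.

Definition single_supported (x : nat -> V) : Prop :=
  exists (n : nat) (h : V), x n = h /\ forall k : nat, k <> n -> x k = 0.

Definition cor318_for : Prop :=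
  forall (ip : V -> V -> K), is_Hilbert ip -> dim_ge2 ->
  forall p : R, 1 < p -> p != 2 ->
  forall x : nat -> V, in_lp ip p x ->
    (left_symmetric ip p x <-> single_supported x) /\
    (right_symmetric ip p x <-> single_supported x).

End Hilbert.

(* Main.v *)
Require Import Defs.
From HB Require Import structures.
From mathcomp Require Import all_boot all_order all_algebra.
From mathcomp Require Import all_classical all_reals all_analysis.
From mathcomp Require Import complex.
From mathcomp Require Import ring lra.
Set Implicit Arguments. Unset Strict Implicit. Unset Printing Implicit Defensive.
Import Order.TTheory GRing.Theory Num.Theory numFieldNormedType.Exports.
Local Open Scope classical_set_scope.
Local Open Scope ring_scope.

Section Seq.
Variable R : realType.

Lemma series_delta (i : nat) (e : R) n :
  series (fun k => if k == i then e else 0) n = if (i < n)%N then e else 0.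
Proof.
elim: n => [|n IH]; first by rewrite /series /= big_geq.
rewrite seriesSr IH.
case: (eqVneq n i) => [->|ni]; first by rewrite ltnn ltnSn add0r.
by rewrite addr0 [in RHS]ltnS [in RHS]leq_eqVlt (eq_sym i n) (negPf ni).
Qed.

Lemma T1 (s : nat -> R) (c e : R) (i : nat) : cvgn (series s) ->
  cvgn (series (fun k => c * s k + (if k == i then e else 0))) /\
  limn (series (fun k => c * s k + (if k == i then e else 0))) = c * limn (series s) + e.
Proof.
move=> cs.
have eq : series (fun k => c * s k + (if k == i then e else 0)) =
          (fun n => c * series s n + series (fun k => if k == i then e else 0) n).
  apply/funext => n; rewrite /series /= big_split /= -mulr_sumr //.
have h : series (fun k => c * s k + (if k == i then e else 0)) @ \oo --> c * limn (series s) + e.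
  rewrite eq; apply: cvgD; first by apply: cvgMr.
  apply: cvg_near_cst; near=> n; rewrite series_delta.
  suff -> : (i < n)%N by [].
  by near: n; exists i.+1.
split; first by apply/cvg_ex; eexists; exact: h.
exact: cvg_lim h.
Unshelve. all: by end_near.
Qed.

Lemma lim_ge0 (f : nat -> R) : cvgn (series f) -> (forall k, 0 <= f k) ->
  0 <= limn (series f).
Proof.
move=> cf f0; apply: limr_ge => //; near=> n.
by rewrite /series /=; apply: sumr_ge0 => k _.
Unshelve. all: by end_near.
Qed.

End Seq.

Section Helpers.
Variable R : realType.
Lemma powR_cont (r y : R) : 0 < y -> {for y, continuous (fun x => x `^ r)}.
Proof.
move=> y0.
have h : derivable (fun x => x `^ r) y 1 by apply: derivable_powR; rewrite in_itv /= y0.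
apply: differentiable_continuous.
by apply/derivable1_diffP.
Qed.

Lemma E_cont (r a c c' B : R) : 0 < a ->
  {for 0, continuous (fun t : R => Num.sqrt (a + 2 * t * c + t ^+ 2 * B) `^ r * (c' + t * B))}.
Proof.
move=> a0.
apply: continuousM.
  apply: (@continuous_comp _ _ _ (fun t : R => Num.sqrt (a + 2 * t * c + t ^+ 2 * B)) (fun x => x `^ r)).
    apply: continuous_comp; last exact: sqrt_continuous.
    apply: continuousD; first apply: continuousD.
    - exact: cst_continuous.
    - apply: continuousM; last exact: cst_continuous.
      apply: continuousM; first exact: cst_continuous.
      exact: cvg_id.
    - apply: continuousM; last exact: cst_continuous.
      apply: continuousM; exact: cvg_id.
  apply: powR_cont.
  rewrite /= mulr0 mul0r addr0 expr0n /= mul0r addr0 sqrtr_gt0 //.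
apply: continuousD; first exact: cst_continuous.
apply: continuousM; last exact: cst_continuous.
exact: cvg_id.
Qed.
End Helpers.

Section Abs.
Variables (R : realType) (K : fieldType) (re : K -> R) (cj : K -> K) (emb : R -> K).
Hypothesis reD : forall a b, re (a + b) = re a + re b.
Hypothesis reM : forall r a, re (emb r * a) = r * re a.
Hypothesis re_emb : forall r, re (emb r) = r.
Hypothesis embD : forall r s, emb (r + s) = emb r + emb s.
Hypothesis embM : forall r s, emb (r * s) = emb r * emb s.
Hypothesis emb1 : emb 1 = 1.
Hypothesis cjD : forall a b, cj (a + b) = cj a + cj b.
Hypothesis cjM : forall a b, cj (a * b) = cj a * cj b.
Hypothesis cjK : forall a, cj (cj a) = a.
Hypothesis cj_emb : forall r, cj (emb r) = emb r.
Hypothesis reJ : forall a, re (cj a) = re a.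
Hypothesis re_nn : forall a, 0 <= re (a * cj a).
Hypothesis re_eq0 : forall a, re (a * cj a) = 0 -> a = 0.
Hypothesis cj_real : forall a, cj a = a -> a = emb (re a).

Lemma dbl0 (T : zmodType) (a : T) : a = a + a -> a = 0.
Proof. by move=> h; apply: (addrI a); rewrite addr0 -h. Qed.
Lemma emb0 : emb 0 = 0.
Proof. by apply: dbl0; rewrite -embD addr0. Qed.
Lemma re0 : re 0 = 0.
Proof. by rewrite -emb0 re_emb. Qed.
Lemma cj0 : cj 0 = 0.
Proof. by rewrite -emb0 cj_emb. Qed.
Lemma reN a : re (- a) = - re a.
Proof. by apply/eqP; rewrite -addr_eq0 -reD addNr re0. Qed.
Lemma cjN a : cj (- a) = - cj a.
Proof. by apply/eqP; rewrite -addr_eq0 -cjD addNr cj0. Qed.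
Lemma embN r : emb (- r) = - emb r.
Proof. by apply/eqP; rewrite -addr_eq0 -embD addNr emb0. Qed.

Definition nk (l : K) : R := Num.sqrt (re (l * cj l)).

Lemma nk_emb t : nk (emb t) = `|t|.
Proof. by rewrite /nk cj_emb -embM re_emb -expr2 sqrtr_sqr. Qed.

Lemma nkM t m : nk (emb t * m) = `|t| * nk m.
Proof.
rewrite /nk cjM cj_emb mulrACA -embM reM sqrtrM ?sqr_ge0 //.
by rewrite -expr2 sqrtr_sqr.
Qed.

Lemma nk_ge0 l : 0 <= nk l. Proof. exact: sqrtr_ge0. Qed.

Variable V : lmodType K.
Variable ip : V -> V -> K.
Hypothesis ipH : is_inner_product re cj ip.

Lemma ipL a x y z : ip (a *: x + y) z = a * ip x z + ip y z.
Proof. by case: ipH. Qed.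
Lemma ipC x y : ip y x = cj (ip x y).
Proof. by case: ipH. Qed.
Lemma ipQ_ge0 x : 0 <= re (ip x x).
Proof. by case: ipH. Qed.
Lemma ip_def x : ip x x = 0 -> x = 0.
Proof. by case: ipH => _ _ _; apply. Qed.

Lemma ip0l z : ip 0 z = 0.
Proof.
by apply: dbl0; have := ipL 1 0 0 z; rewrite scaler0 addr0 mul1r.
Qed.
Lemma ip0r z : ip z 0 = 0.
Proof. by rewrite ipC ip0l cj0. Qed.
Lemma ipDl x y z : ip (x + y) z = ip x z + ip y z.
Proof. by rewrite -[x]scale1r ipL mul1r scale1r. Qed.
Lemma ipZl a x z : ip (a *: x) z = a * ip x z.
Proof. by rewrite -[a *: x]addr0 ipL ip0l addr0. Qed.
Lemma ipDr x y z : ip z (x + y) = ip z x + ip z y.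
Proof. by rewrite ipC ipDl cjD -!ipC. Qed.
Lemma ipZr a x z : ip z (a *: x) = cj a * ip z x.
Proof. by rewrite ipC ipZl cjM -ipC. Qed.
Lemma ip_real x : ip x x = emb (re (ip x x)).
Proof. by apply: cj_real; rewrite -ipC. Qed.

Local Notation Q x := (re (ip x x)).
Local Notation N x := (ipnorm re ip x).

Lemma N_ge0 x : 0 <= N x. Proof. exact: sqrtr_ge0. Qed.
Lemma N_sqr x : N x ^+ 2 = Q x.
Proof. by rewrite /ipnorm sqr_sqrtr // ipQ_ge0. Qed.
Lemma N0 : N 0 = 0.
Proof. by rewrite /ipnorm ip0l re0 sqrtr0. Qed.
Lemma Q_eq0 x : Q x = 0 -> x = 0.
Proof. by move=> h; apply: ip_def; rewrite ip_real h emb0. Qed.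
Lemma N_gt0_Q x : x != 0 -> 0 < Q x.
Proof.
move=> x0; rewrite lt_def ipQ_ge0 andbT.
by apply/eqP => /Q_eq0 /eqP; rewrite (negPf x0).
Qed.

Lemma N_gt0 x : x != 0 -> 0 < N x.
Proof.
move=> x0; rewrite /ipnorm sqrtr_gt0 lt_def ipQ_ge0 andbT.
by apply/eqP => /Q_eq0 /eqP; rewrite (negPf x0).
Qed.

Lemma Q_exp u w l :
  Q (u + l *: w) = Q u + 2 * re (l * ip w u) + re (l * cj l) * Q w.
Proof.
rewrite ipDl ipDr ipZl ipDr !ipZr !reD.
have -> : re (cj l * ip u w) = re (l * ip w u).
  by rewrite [ip u w]ipC -cjM reJ.
rewrite [ip w w]ip_real re_emb mulrDr reD mulrA [_ * emb _]mulrC reM.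
ring.
Qed.

Lemma Q_exp_real u w t :
  Q (u + emb t *: w) = Q u + 2 * t * re (ip w u) + t ^+ 2 * Q w.
Proof.
by rewrite Q_exp reM cj_emb -embM re_emb mulrA expr2.
Qed.

Lemma NZ l w : N (l *: w) = nk l * N w.
Proof.
have := Q_exp 0 w l; rewrite add0r !ip0r mulr0 !re0 mulr0 !add0r.
by rewrite /ipnorm /nk => ->; rewrite sqrtrM // re_nn.
Qed.


Lemma CS u v : re (ip u v) <= N u * N v.
Proof.
have [->|v0] := eqVneq v 0.
  by rewrite ip0r re0 N0 mulr0.
have Qv : 0 < Q v by rewrite -N_sqr exprn_gt0 // N_gt0.
set r := re (ip u v).
have := ipQ_ge0 (u + emb (- (r / Q v)) *: v).
rewrite Q_exp_real.
have -> : re (ip v u) = r by rewrite /r ipC reJ.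
move=> h.
have h2 : r ^+ 2 <= (N u * N v) ^+ 2.
  rewrite exprMn !N_sqr.
  have e : Q u + 2 * - (r / Q v) * r + (- (r / Q v)) ^+ 2 * Q v
         = Q u - r ^+ 2 / Q v.
    by field; rewrite gt_eqF.
  rewrite e subr_ge0 ler_pdivrMr // in h.
apply: le_trans (ler_norm r) _.
rewrite -ler_sqr ?nnegrE ?normr_ge0 ?mulr_ge0 ?N_ge0 //.
by rewrite real_normK ?num_real.
Qed.

Lemma bernoulli (p s A : R) : 1 < p -> 0 <= s -> 0 < A ->
  A `^ p + p * A `^ (p - 1) * (s - A) <= s `^ p.
Proof.
move=> p1 s0 A0.
have p0 : 0 < p by apply: lt_trans p1.
have pm1 : 0 < p - 1 by rewrite subr_gt0.
have q0 : 0 < p / (p - 1) by rewrite divr_gt0.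
have h := conjugate_powR s0 (powR_ge0 A (p - 1)) p0 q0.
have e1 : p^-1 + (p / (p - 1))^-1 = 1.
  by field; rewrite ?gt_eqF // subr_eq0 gt_eqF.
have {h} := h e1.
rewrite -powRrM.
have -> : (p - 1) * (p / (p - 1)) = p by field; rewrite subr_eq0 gt_eqF.
have e : A `^ (p - 1) * A = A `^ p by rewrite mulrC mulr_powRB1 // ltW.
move: e; set B := A `^ (p - 1); set Ap := A `^ p; set sp := s `^ p => e; clearbody B Ap sp.
have -> : (p / (p - 1))^-1 = (p - 1) / p.
  by field; rewrite ?gt_eqF // subr_eq0 gt_eqF.
move=> h.
have h' : p * (s * B) <= sp + (p - 1) * Ap.
  have -> : sp + (p - 1) * Ap = p * (sp / p + Ap * ((p - 1) / p)).
    by field; rewrite ?gt_eqF // subr_eq0 gt_eqF.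
  by rewrite ler_pM2l.
have -> : Ap + p * B * (s - A) = Ap + p * (s * B) - p * Ap by rewrite -e; ring.
lra.
Qed.

Lemma GI p u w : 1 < p ->
  N u `^ p + p * N u `^ (p - 2) * re (ip w u) <= N (u + w) `^ p.
Proof.
move=> p1; have p0 : 0 < p by apply: lt_trans p1.
have [->|u0] := eqVneq u 0.
  by rewrite ip0r re0 mulr0 addr0 N0 powR0 ?gt_eqF // powR_ge0.
have A0 := N_gt0 u0.
have key : N u ^+ 2 + re (ip w u) <= N (u + w) * N u.
  by rewrite N_sqr -reD -ipDl CS.
apply: le_trans (bernoulli p1 (N_ge0 _) A0).
rewrite lerD2l.
have -> : p - 1 = (p - 2) + 1 by ring.
rewrite [N u `^ (p - 2 + 1)]powRD; last by apply/implyP => _; rewrite gt_eqF.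
rewrite (powRr1 (N_ge0 u)) -!mulrA ler_pM2l // ler_pM2l ?powR_gt0 //.
by rewrite mulrBr -expr2 lerBrDl mulrC.
Qed.

Lemma GIrev p z w t : 1 < p ->
  N (z + emb t *: w) `^ p <=
  N z `^ p + p * t * (N (z + emb t *: w) `^ (p - 2) * (re (ip w z) + t * Q w)).
Proof.
move=> p1.
have := GI (z + emb t *: w) (emb (- t) *: w) p1.
rewrite -addrA -scalerDl -embD subrr emb0 scale0r addr0.
rewrite ipZl reM ipDr ipZr cj_emb reD [ip w w]ip_real -embM re_emb.
move=> h; rewrite -lerBlDr; apply: le_trans h.
rewrite lerBlDr re_emb; match goal with |- is_true (?a <= ?b) => have -> : b = a :> R by ring end; exact: lexx.
Qed.

Lemma LD p z1 z2 w1 w2 M : 1 < p -> z1 != 0 -> z2 != 0 ->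
  N z1 `^ (p - 2) * re (ip w1 z1) + N z2 `^ (p - 2) * re (ip w2 z2) != 0 ->
  exists t : R, N (z1 + emb t *: w1) `^ p + N (z2 + emb t *: w2) `^ p
      + `|t| `^ p * M < N z1 `^ p + N z2 `^ p.
Proof.
move=> p1 nz1 nz2 D0.
have p0 : 0 < p by apply: lt_trans p1.
set D := _ + _ in D0.
set c1 := re (ip w1 z1); set c2 := re (ip w2 z2).
set B1 := Q w1; set B2 := Q w2.
pose E t := Num.sqrt (Q z1 + 2 * t * c1 + t ^+ 2 * B1) `^ (p - 2) * (c1 + t * B1)
          + Num.sqrt (Q z2 + 2 * t * c2 + t ^+ 2 * B2) `^ (p - 2) * (c2 + t * B2).
have Qz1 : 0 < Q z1 by rewrite -N_sqr exprn_gt0 // N_gt0.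
have Qz2 : 0 < Q z2 by rewrite -N_sqr exprn_gt0 // N_gt0.
have Econt : {for 0, continuous E}.
  by apply: continuousD; apply: E_cont.
have E0 : E 0 = D.
  by rewrite /E /D !mul0r !mulr0 !addr0 expr0n /= !mul0r !addr0.
have Dp : 0 < `|D| by rewrite normr_gt0.
have := (cvgrPdist_lt E (E 0)).1 Econt _ (divr_gt0 Dp (ltr0n _ 2)).
rewrite E0 => H; have {H} H := H (nbhs_filter (0:R)); have [d d0 hd] := (nbhs_ballP (0:R^o) _).1 H; move: d0 => /= d0.
set kap := p * `|D| / 2.
have kap0 : 0 < kap by rewrite divr_gt0 ?mulr_gt0.
set X := kap / (`|M| + 1).
have X0 : 0 < X by rewrite divr_gt0 // ltr_pwDr.
set eps := Num.min (d / 2) (X `^ (p - 1)^-1).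
have pm1 : 0 < p - 1 by rewrite subr_gt0.
have eps0 : 0 < eps by rewrite lt_min divr_gt0 //= powR_gt0.
have epsd : eps < d.
  by rewrite /eps gt_min ltr_pdivrMr // ltr_pMr // ltr1n.
have epsX : eps `^ (p - 1) <= X.
  have -> : X = (X `^ (p - 1)^-1) `^ (p - 1).
    by rewrite -powRrM mulVf ?gt_eqF // powRr1 // ltW.
  apply: ge0_ler_powR; rewrite ?nnegrE ?powR_ge0 ?(ltW pm1) ?(ltW eps0) //.
  by rewrite /eps ge_min lexx orbT.
have [t [tabs tD]] : exists t, `|t| = eps /\ t * D = - (eps * `|D|).
  case: (ltP 0 D) => hD.
    exists (- eps); rewrite normrN gtr0_norm // (gtr0_norm hD); split => //.
    by rewrite mulNr.
  have hD' : D < 0 by rewrite lt_neqAle D0 hD.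
  exists eps; rewrite gtr0_norm // (ltr0_norm hD'); split => //.
  by rewrite mulrN opprK.
exists t.
have ht : `|D - E t| < `|D| / 2.
  by apply: hd; rewrite /ball /= sub0r normrN tabs.
have h1 := GIrev z1 w1 t p1.
have h2 := GIrev z2 w2 t p1.
have eN : forall z w, N (z + emb t *: w) = Num.sqrt (Q z + 2 * t * re (ip w z) + t ^+ 2 * Q w).
  by move=> z w; rewrite /ipnorm Q_exp_real.
rewrite !eN in h1 h2.
have hE : p * t * (Num.sqrt (Q z1 + 2 * t * c1 + t ^+ 2 * B1) `^ (p - 2) * (c1 + t * B1))
        + p * t * (Num.sqrt (Q z2 + 2 * t * c2 + t ^+ 2 * B2) `^ (p - 2) * (c2 + t * B2))
        = p * (t * E t) by rewrite /E; ring.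
have F1 : t * E t <= - (eps * `|D|) + eps * (`|D| / 2).
  have -> : t * E t = t * D + t * (E t - D) by ring.
  rewrite tD lerD2l; apply: le_trans (ler_norm _) _.
  by rewrite normrM tabs ler_wpM2l ?(ltW eps0) // distrC; apply: ltW.
have F2 : `|t| `^ p * M <= eps `^ p * `|M|.
  by rewrite tabs ler_wpM2l ?powR_ge0 // ler_norm.
have F3 : eps `^ p = eps * eps `^ (p - 1) by rewrite mulr_powRB1 // ltW.
have F4 : eps `^ (p - 1) * `|M| <= X * `|M| by rewrite ler_wpM2r.
have F5 : X * `|M| < kap.
  rewrite /X mulrAC ltr_pdivrMr ?ltr_pwDr // ltr_pM2l //.
  by rewrite ltrDl.
have G1 : p * (t * E t) <= - (eps * kap).
  apply: le_trans (ler_wpM2l (ltW p0) F1) _.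
  by rewrite /kap; match goal with |- is_true (?a <= ?b) => have -> : a = b :> R by field end.
have G2 : eps * (eps `^ (p - 1) * `|M|) < eps * kap.
  by rewrite ltr_pM2l //; apply: le_lt_trans F4 F5.
rewrite F3 -mulrA in F2.
have h := lerD h1 h2.
rewrite !eN.
rewrite /c1 /c2 /B1 /B2 in hE.
move: h hE G1 F2 G2.
set S1 := Num.sqrt _ `^ p; set S2 := Num.sqrt _ `^ p.
set T1 := p * t * _; set T2 := p * t * _.
set U := p * (t * E t). set Z := eps * _.
move=> h hE G1 F2 G2.
lra.
Qed.

Variable p : R.
Hypothesis p1 : 1 < p.
Hypothesis p2 : p != 2.

Lemma p0 : 0 < p. Proof. by apply: lt_trans p1. Qed.

Definition tm (z : nat -> V) k := N (z k) `^ p.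
Definition Sz (z : nat -> V) := limn (series (tm z)).

Lemma tm_ge0 z k : 0 <= tm z k. Proof. exact: powR_ge0. Qed.

Lemma N0p : N 0 `^ p = 0.
Proof. by rewrite N0 powR0 // gt_eqF // p0. Qed.

Lemma pw_le a b : 0 <= a -> 0 <= b -> (a `^ p^-1 <= b `^ p^-1) = (a <= b).
Proof.
move=> a0 b0; have ip0 : 0 < p^-1 by rewrite invr_gt0 p0.
apply/idP/idP => h; last by apply: ge0_ler_powR; rewrite ?nnegrE // ltW.
rewrite leNgt; apply/negP => ba.
have := gt0_ltr_powR ip0 b0 a0 ba.
by rewrite ltNge h.
Qed.

Lemma lpnormE z : lpnorm re ip p z = Sz z `^ p^-1.
Proof. by []. Qed.

Lemma Sz_ge0 z : cvgn (series (tm z)) -> 0 <= Sz z.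
Proof. by move=> h; apply: lim_ge0 h (@tm_ge0 z). Qed.

Lemma decomp1 (u : nat -> V) (f : nat -> R) c i : cvgn (series f) ->
  (forall k, k != i -> tm u k = c * f k) ->
  cvgn (series (tm u)) /\ Sz u = c * limn (series f) + (tm u i - c * f i).
Proof.
move=> cf h.
have e : tm u = (fun k => c * f k + (if k == i then tm u i - c * f i else 0)).
  apply/funext => k; case: (eqVneq k i) => [->|ki]; first by rewrite addrC subrK.
  by rewrite addr0 h.
have [H1 H2] := T1 c (tm u i - c * f i) i cf.
by rewrite -e in H1 H2.
Qed.

Lemma decomp2 (u : nat -> V) (f : nat -> R) c i j : i != j -> cvgn (series f) ->
  (forall k, k != i -> k != j -> tm u k = c * f k) ->
  cvgn (series (tm u)) /\
  Sz u = c * limn (series f) + (tm u i - c * f i) + (tm u j - c * f j).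
Proof.
move=> ij cf h.
pose g k := c * f k + (if k == i then tm u i - c * f i else 0).
have [cg lg] := T1 c (tm u i - c * f i) i cf.
have e : tm u = (fun k => 1 * g k + (if k == j then tm u j - 1 * g j else 0)).
  apply/funext => k; rewrite /g !mul1r.
  case: (eqVneq k j) => [->|kj]; first by rewrite addrC subrK.
  rewrite addr0; case: (eqVneq k i) => [->|ki]; first by rewrite addrC subrK.
  by rewrite addr0 h.
have [c2 l2] := T1 1 (tm u j - 1 * g j) j cg.
rewrite -e in c2 l2; rewrite /Sz; split => //.
by rewrite l2 mul1r lg /g eq_sym (negPf ij) addr0 mul1r.
Qed.

Lemma lim_ge_term (f : nat -> R) i : cvgn (series f) -> (forall k, 0 <= f k) ->
  f i <= limn (series f).
Proof.
move=> cf f0; have [cg lg] := T1 1 (- f i) i cf.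
rewrite -subr_ge0 -[X in X - _]mul1r -lg; apply: lim_ge0 => // k.
by case: (eqVneq k i) => [->|_]; rewrite ?mul1r ?subrr ?addr0.
Qed.

Lemma lim_ge_two (f : nat -> R) i j : i != j -> cvgn (series f) -> (forall k, 0 <= f k) ->
  f i + f j <= limn (series f).
Proof.
move=> ij cf f0; have [cg lg] := T1 1 (- f i) i cf.
have [ch lh] := T1 1 (- (1 * f j + (if j == i then - f i else 0))) j cg.
move: ch lh; rewrite lg eq_sym (negPf ij) addr0 !mul1r => ch lh.
have H := lim_ge0 ch.
rewrite lh in H; suff : 0 <= limn (series f) - f i - f j by lra.
apply: H => k; rewrite !mul1r.
case: (eqVneq k j) => [->|kj]; first by rewrite eq_sym (negPf ij) addr0 subrr.
rewrite addr0; case: (eqVneq k i) => [->|_]; rewrite ?subrr ?addr0 //.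
Qed.

Lemma powR_pm2 A : 0 < A -> A `^ (p - 2) * A ^+ 2 = A `^ p.
Proof.
move=> A0; rewrite -powR_mulrn ?ltW // -powRD; first by rewrite subrK.
by apply/implyP => _; rewrite gt_eqF.
Qed.

Lemma powR_pm1 A : 0 < A -> A `^ (p - 2) * A = A `^ (p - 1).
Proof.
move=> A0; rewrite -{2}(powRr1 (ltW A0)) -powRD; first by congr (_ `^ _); ring.
by apply/implyP => _; rewrite gt_eqF.
Qed.

Lemma powR_ne (a b r : R) : 0 < a -> a < b -> r != 0 -> a `^ r != b `^ r.
Proof.
move=> a0 ab r0; rewrite /powR (gt_eqF a0) (gt_eqF (lt_trans a0 ab)).
apply/eqP => /expR_inj /eqP; rewrite (inj_eq (mulfI r0)).
move=> /eqP /ln_inj; rewrite !posrE => /(_ a0 (lt_trans a0 ab)) e; by move: ab; rewrite e ltxx.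
Qed.

Lemma tmZ l w : N (l *: w) `^ p = nk l `^ p * N w `^ p.
Proof. by rewrite NZ powRM // ?nk_ge0 ?N_ge0. Qed.

Lemma N_mono u v : Q u <= Q v -> N u `^ p <= N v `^ p.
Proof.
move=> h; apply: ge0_ler_powR; rewrite ?nnegrE ?N_ge0 ?(ltW p0) //.
by rewrite /ipnorm ler_sqrt // ipQ_ge0.
Qed.

Lemma ortho_grow u v l : ip v u = 0 -> N u `^ p <= N (u + l *: v) `^ p.
Proof.
move=> h; apply: N_mono; rewrite Q_exp h mulr0 re0 mulr0 addr0 lerDl.
by rewrite mulr_ge0 ?re_nn ?ipQ_ge0.
Qed.

Lemma orth_from_min z w M :
  (forall l, N z `^ p <= N (z + l *: w) `^ p + nk l `^ p * M) -> ip w z = 0.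
Proof.
move=> H.
have [->|z0] := eqVneq z 0; first by rewrite ip0r.
case: (eqVneq (ip w z) 0) => // zz0; exfalso.
set zz := ip w z in zz0; set mu := - cj zz.
have D0 : N z `^ (p - 2) * re (ip (mu *: w) z) + N z `^ (p - 2) * re (ip 0 z) != 0.
  rewrite ip0l re0 mulr0 addr0 ipZl -/zz /mu mulNr reN mulrN oppr_eq0 [cj zz * zz]mulrC.
  rewrite mulf_neq0 //; first by rewrite gt_eqF // powR_gt0 // N_gt0.
  by apply/eqP => /re_eq0 /eqP; rewrite (negPf zz0).
have [t ht] := @LD p z z (mu *: w) 0 (nk mu `^ p * M) p1 z0 z0 D0.
have := H (emb t * mu).
rewrite nkM powRM ?normr_ge0 ?nk_ge0 // -scalerA.
move: ht; rewrite scaler0 addr0.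
set A := N (z + _) `^ p; set B := N z `^ p.
rewrite mulrA.
set C := `|t| `^ p * _ * M; lra.
Qed.

Lemma single_S (x : nat -> V) n h : (forall k, k != n -> x k = 0) -> x n = h ->
  cvgn (series (tm x)) -> Sz x = N h `^ p.
Proof.
move=> xk xn cx.
have hk : forall k, k != n -> tm x k = 0 * tm x k by move=> k kn; rewrite /tm xk // N0p mul0r.
have [_ ->] := decomp1 cx hk.
by rewrite !mul0r add0r subr0 /tm xn.
Qed.

Lemma S_xy (x y : nat -> V) n h l : (forall k, k != n -> x k = 0) -> x n = h ->
  cvgn (series (tm y)) ->
  cvgn (series (tm (fun k => x k + l *: y k))) /\
  Sz (fun k => x k + l *: y k) =
    nk l `^ p * Sz y + (N (h + l *: y n) `^ p - nk l `^ p * N (y n) `^ p).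
Proof.
move=> xk xn cy.
have hk : forall k, k != n -> tm (fun k => x k + l *: y k) k = nk l `^ p * tm y k.
  by move=> k kn; rewrite /tm xk // add0r tmZ.
have := decomp1 cy hk.
by rewrite /tm xn.
Qed.

Lemma S_yx (x y : nat -> V) n h l : (forall k, k != n -> x k = 0) -> x n = h ->
  cvgn (series (tm y)) ->
  cvgn (series (tm (fun k => y k + l *: x k))) /\
  Sz (fun k => y k + l *: x k) = Sz y + (N (y n + l *: h) `^ p - N (y n) `^ p).
Proof.
move=> xk xn cy.
have hk : forall k, k != n -> tm (fun k => y k + l *: x k) k = 1 * tm y k.
  by move=> k kn; rewrite /tm xk // scaler0 addr0 mul1r.
have := decomp1 cy hk.
by rewrite /tm xn !mul1r.
Qed.

Lemma BJE (x y : nat -> V) :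
  cvgn (series (tm x)) -> (forall l, cvgn (series (tm (fun k => x k + l *: y k)))) ->
  BJ_orth re ip p x y <-> (forall l, Sz x <= Sz (fun k => x k + l *: y k)).
Proof.
move=> cx cxy; rewrite /BJ_orth.
have g0 := Sz_ge0 cx.
split => H l; have g1 := Sz_ge0 (cxy l); move: (H l); rewrite !lpnormE pw_le //.
Qed.

Lemma left_A (x y : nat -> V) n h : (forall k, k != n -> x k = 0) -> x n = h ->
  cvgn (series (tm x)) -> cvgn (series (tm y)) ->
  BJ_orth re ip p x y -> BJ_orth re ip p y x.
Proof.
move=> xk xn cx cy.
have cxy l := (S_xy l xk xn cy).1.
have cyx l := (S_yx l xk xn cy).1.
move/(BJE cx cxy) => H.
have z0 : ip (y n) h = 0.
  apply: (@orth_from_min _ _ (Sz y - N (y n) `^ p)) => l.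
  have := H l; rewrite (single_S xk xn cx); case: (S_xy l xk xn cy) => _ ->.
  move=> h1; apply: le_trans h1 _.
  by rewrite mulrBr addrCA addrA.
apply/(BJE cy cyx) => l.
case: (S_yx l xk xn cy) => _ ->; rewrite lerDl subr_ge0.
by apply: ortho_grow; rewrite ipC z0 cj0.
Qed.

Lemma right_A (x y : nat -> V) n h : (forall k, k != n -> x k = 0) -> x n = h ->
  cvgn (series (tm x)) -> cvgn (series (tm y)) ->
  BJ_orth re ip p y x -> BJ_orth re ip p x y.
Proof.
move=> xk xn cx cy.
have cxy l := (S_xy l xk xn cy).1.
have cyx l := (S_yx l xk xn cy).1.
move/(BJE cy cyx) => H.
have z0 : ip h (y n) = 0.
  apply: (@orth_from_min _ _ 0) => l.
  have := H l; case: (S_yx l xk xn cy) => _ ->.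
  by rewrite mulr0 addr0 lerDl subr_ge0.
apply/(BJE cx cxy) => l.
case: (S_xy l xk xn cy) => _ ->; rewrite (single_S xk xn cx).
have g1 : N h `^ p <= N (h + l *: y n) `^ p by apply: ortho_grow; rewrite ipC z0 cj0.
have g2 : N (y n) `^ p <= Sz y := lim_ge_term n cy (@tm_ge0 y).
have g3 : 0 <= nk l `^ p := powR_ge0 _ _.
have g4 : 0 <= nk l `^ p * (Sz y - N (y n) `^ p) by rewrite mulr_ge0 // subr_ge0.
by apply: le_trans g1 _; rewrite addrCA lerDl -mulrBr.
Qed.

Lemma rearr (T S A B a b : R) : T * S + (A - T * a) + (B - T * b) = A + B + T * (S - a - b).
Proof. by ring. Qed.

Lemma cj1 : cj 1 = 1. Proof. by rewrite -emb1 cj_emb. Qed.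

Lemma Qpyth a v : ip v a = 0 -> Q (a + v) = Q a + Q v.
Proof.
move=> va; have := Q_exp a v 1; rewrite scale1r => ->.
by rewrite mul1r va re0 mulr0 addr0 cj1 mulr1 -emb1 re_emb mul1r.
Qed.

Lemma ipr_pyth a v : ip v a = 0 -> ip a (a + v) = emb (Q a).
Proof. by move=> va; rewrite ipDr [ip a v]ipC va cj0 addr0 -ip_real. Qed.

Lemma ipl_pyth a v : ip v a = 0 -> ip (a + v) a = emb (Q a).
Proof. by move=> va; rewrite ipDl va addr0 -ip_real. Qed.

Lemma re_lemb l q : re (l * emb q) = q * re l.
Proof. by rewrite mulrC reM. Qed.

Lemma N_av_gt a v : a != 0 -> ip v a = 0 -> 0 < N (a + v).
Proof.
move=> a0 va; rewrite /ipnorm sqrtr_gt0 Qpyth //.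
have := N_gt0 a0; rewrite /ipnorm sqrtr_gt0 => h.
by apply: lt_le_trans h _; rewrite lerDl ipQ_ge0.
Qed.

Lemma N_scal_gt c b : 0 < c -> b != 0 -> N (emb (- c) *: b) = c * N b.
Proof. by move=> c0 b0; rewrite NZ nk_emb normrN gtr0_norm. Qed.

Lemma left_fail (x : nat -> V) i j v : i != j -> x i != 0 -> x j != 0 ->
  cvgn (series (tm x)) -> ip v (x i) = 0 ->
  N (x i + v) `^ (p - 2) * N (x i) ^+ 2
   - (N (x i) `^ p / N (x j) `^ p * N (x j)) `^ (p - 2)
     * (N (x i) `^ p / N (x j) `^ p * N (x j) ^+ 2) != 0 ->
  ~ left_symmetric re ip p x.
Proof.
move=> ij ai bj cx va D0.
move: ai va D0; set a := x i => ai va D0.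
move: bj D0; set b := x j => bj D0.
set al := N a in D0 *; set be := N b in D0 *.
have al0 : 0 < al := N_gt0 ai.
have be0 : 0 < be := N_gt0 bj.
set c := al `^ p / be `^ p in D0 *.
have c0 : 0 < c by rewrite divr_gt0 // powR_gt0.
pose y k := if k == i then a + v else if k == j then emb (- c) *: b else 0.
have yi : y i = a + v by rewrite /y eqxx.
have yj : y j = emb (- c) *: b by rewrite /y eq_sym (negPf ij) eqxx.
have yk k : k != i -> k != j -> y k = 0 by move=> ki kj; rewrite /y (negPf ki) (negPf kj).
have [cy Sy] : cvgn (series (tm y)) /\ Sz y = tm y i + tm y j.
  have hk k : k != i -> k != j -> tm y k = 0 * tm x k.
    by move=> ki kj; rewrite /tm yk // N0p mul0r.
  have [c1 e1] := decomp2 ij cx hk; split => //.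
  by rewrite e1 !mul0r add0r !subr0.
have Sxy l : cvgn (series (tm (fun k => x k + l *: y k))) /\
   Sz (fun k => x k + l *: y k) = Sz x + (N (a + l *: (a + v)) `^ p - al `^ p)
      + (N (b + l *: (emb (- c) *: b)) `^ p - be `^ p).
  have hk k : k != i -> k != j -> tm (fun k => x k + l *: y k) k = 1 * tm x k.
    by move=> ki kj; rewrite /tm yk // scaler0 addr0 mul1r.
  have [c1 e1] := decomp2 ij cx hk; split => //.
  by rewrite e1 mul1r /tm yi yj !mul1r.
have Syx l : cvgn (series (tm (fun k => y k + l *: x k))) /\
   Sz (fun k => y k + l *: x k) = nk l `^ p * Sz x
      + (N (a + v + l *: a) `^ p - nk l `^ p * al `^ p)
      + (N (emb (- c) *: b + l *: b) `^ p - nk l `^ p * be `^ p).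
  have hk k : k != i -> k != j -> tm (fun k => y k + l *: x k) k = nk l `^ p * tm x k.
    by move=> ki kj; rewrite /tm yk // add0r tmZ.
  have [c1 e1] := decomp2 ij cx hk; split => //.
  by rewrite e1 /tm yi yj.
move/(_ y cy) => H.
have bxy : BJ_orth re ip p x y.
  apply/(BJE cx (fun l => (Sxy l).1)) => l; rewrite (Sxy l).2.
  have g1 := GI a (l *: (a + v)) p1.
  have g2 := GI b (l *: (emb (- c) *: b)) p1.
  rewrite ipZl ipl_pyth // re_lemb -N_sqr -/al in g1.
  rewrite ipZl ipZl [ip b b]ip_real -embM re_lemb -N_sqr -/be in g2.
  have e : p * al `^ (p - 2) * (al ^+ 2 * re l) + p * be `^ (p - 2) * (- c * be ^+ 2 * re l) = 0.
    have -> : p * al `^ (p - 2) * (al ^+ 2 * re l) + p * be `^ (p - 2) * (- c * be ^+ 2 * re l)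
       = p * re l * (al `^ (p - 2) * al ^+ 2) - p * re l * c * (be `^ (p - 2) * be ^+ 2) by ring.
    rewrite !powR_pm2 // /c.
    field.
    by rewrite gt_eqF // powR_gt0.
  move: g1 g2 e.
  set T1 := p * al `^ (p - 2) * _; set T2 := p * be `^ (p - 2) * _.
  move=> g1 g2 e.
  rewrite -addrA lerDl addrACA -opprD subr_ge0.
  by apply: le_trans _ (lerD g1 g2); rewrite addrACA e addr0.
have := H bxy.
move/(BJE cy (fun l => (Syx l).1)) => Hyx.
have z1 : a + v != 0.
  by apply/eqP => e; move: (N_av_gt ai va); rewrite e N0 ltxx.
have z2 : emb (- c) *: b != 0.
  apply/eqP => e; have := N_scal_gt c0 bj; rewrite e N0 -/be => /eqP.
  by rewrite eq_sym mulf_eq0 !gt_eqF.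
have D1 : N (a + v) `^ (p - 2) * re (ip a (a + v))
    + N (emb (- c) *: b) `^ (p - 2) * re (ip b (emb (- c) *: b)) != 0.
  rewrite ipr_pyth // re_emb -N_sqr -/al ipZr cj_emb [ip b b]ip_real -embM re_emb.
  by rewrite -N_sqr -/be N_scal_gt // -/be mulNr mulrN.
have [t ht] := @LD p (a + v) (emb (- c) *: b) a b (Sz x - al `^ p - be `^ p) p1 z1 z2 D1.
have := Hyx (emb t); rewrite (Syx (emb t)).2 Sy nk_emb /tm yi yj rearr => h.
by move: (le_lt_trans h ht); rewrite ltxx.
Qed.

Lemma right_fail (x : nat -> V) i j v mu : i != j -> x i != 0 -> x j != 0 ->
  cvgn (series (tm x)) -> ip v (x i) = 0 -> 0 < mu ->
  mu `^ (p - 1) * N (x j) `^ p = N (x i + v) `^ (p - 2) * N (x i) ^+ 2 ->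
  N (x i) `^ p - mu * N (x j) `^ p != 0 ->
  ~ right_symmetric re ip p x.
Proof.
move=> ij ai bj cx va mu0 hmu D0.
move: ai va hmu D0; set a := x i => ai va hmu D0.
move: bj hmu D0; set b := x j => bj hmu D0.
set al := N a in hmu D0 *; set be := N b in hmu D0 *.
have al0 : 0 < al := N_gt0 ai.
have be0 : 0 < be := N_gt0 bj.
pose y k := if k == i then a + v else if k == j then emb (- mu) *: b else 0.
have yi : y i = a + v by rewrite /y eqxx.
have yj : y j = emb (- mu) *: b by rewrite /y eq_sym (negPf ij) eqxx.
have yk k : k != i -> k != j -> y k = 0 by move=> ki kj; rewrite /y (negPf ki) (negPf kj).
have [cy Sy] : cvgn (series (tm y)) /\ Sz y = tm y i + tm y j.
  have hk k : k != i -> k != j -> tm y k = 0 * tm x k.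
    by move=> ki kj; rewrite /tm yk // N0p mul0r.
  have [c1 e1] := decomp2 ij cx hk; split => //.
  by rewrite e1 !mul0r add0r !subr0.
have Sxy l : cvgn (series (tm (fun k => x k + l *: y k))) /\
   Sz (fun k => x k + l *: y k) = Sz x + (N (a + l *: (a + v)) `^ p - al `^ p)
      + (N (b + l *: (emb (- mu) *: b)) `^ p - be `^ p).
  have hk k : k != i -> k != j -> tm (fun k => x k + l *: y k) k = 1 * tm x k.
    by move=> ki kj; rewrite /tm yk // scaler0 addr0 mul1r.
  have [c1 e1] := decomp2 ij cx hk; split => //.
  by rewrite e1 mul1r /tm yi yj !mul1r.
have Syx l : cvgn (series (tm (fun k => y k + l *: x k))) /\
   Sz (fun k => y k + l *: x k) = nk l `^ p * Sz x
      + (N (a + v + l *: a) `^ p - nk l `^ p * al `^ p)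
      + (N (emb (- mu) *: b + l *: b) `^ p - nk l `^ p * be `^ p).
  have hk k : k != i -> k != j -> tm (fun k => y k + l *: x k) k = nk l `^ p * tm x k.
    by move=> ki kj; rewrite /tm yk // add0r tmZ.
  have [c1 e1] := decomp2 ij cx hk; split => //.
  by rewrite e1 /tm yi yj.
move/(_ y cy) => H.
have byx : BJ_orth re ip p y x.
  apply/(BJE cy (fun l => (Syx l).1)) => l; rewrite (Syx l).2 Sy /tm yi yj rearr.
  have g0 : 0 <= nk l `^ p * (Sz x - al `^ p - be `^ p).
    rewrite mulr_ge0 ?powR_ge0 // -addrA -opprD subr_ge0.
    exact: (lim_ge_two ij cx (@tm_ge0 x)).
  have g1 := GI (a + v) (l *: a) p1.
  have g2 := GI (emb (- mu) *: b) (l *: b) p1.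
  rewrite ipZl ipr_pyth // re_lemb -N_sqr -/al in g1.
  rewrite ipZl ipZr cj_emb [ip b b]ip_real -embM re_lemb -N_sqr -/be in g2.
  rewrite N_scal_gt // -/be in g2.
  have e : p * N (a + v) `^ (p - 2) * (al ^+ 2 * re l)
         + p * (mu * be) `^ (p - 2) * (- mu * be ^+ 2 * re l) = 0.
    rewrite powRM ?ltW //.
    have -> : p * N (a + v) `^ (p - 2) * (al ^+ 2 * re l)
         + p * (mu `^ (p - 2) * be `^ (p - 2)) * (- mu * be ^+ 2 * re l)
       = p * re l * (N (a + v) `^ (p - 2) * al ^+ 2)
         - p * re l * ((mu `^ (p - 2) * mu) * (be `^ (p - 2) * be ^+ 2)) by ring.
    by rewrite powR_pm1 // powR_pm2 // hmu subrr.
  move: g1 g2 e.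
  set T1 := p * N (a + v) `^ (p - 2) * _; set T2 := p * (mu * be) `^ (p - 2) * _.
  move=> g1 g2 e.
  apply: le_trans _ (lerD (lerD g1 g2) g0).
  by rewrite N_scal_gt // -/be addr0 addrACA e addr0.
have := H byx.
move/(BJE cx (fun l => (Sxy l).1)) => Hxy.
have z2 : b != 0 := bj.
have D1 : N a `^ (p - 2) * re (ip (a + v) a)
    + N b `^ (p - 2) * re (ip (emb (- mu) *: b) b) != 0.
  rewrite ipl_pyth // re_emb -N_sqr -/al ipZl [ip b b]ip_real -embM re_emb.
  by rewrite -N_sqr -/be -/al powR_pm2 // mulNr mulrN mulrCA powR_pm2.
have [t ht] := @LD p a b (a + v) (emb (- mu) *: b) 0 p1 ai bj D1.
rewrite mulr0 addr0 in ht.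
have := Hxy (emb t); rewrite (Sxy (emb t)).2 -addrA lerDl.
rewrite addrACA -opprD subr_ge0 => h.
by move: (le_lt_trans h ht); rewrite ltxx.
Qed.

Lemma two_nonzero (x : nat -> V) : ~ single_supported x ->
  exists i j, [/\ i != j, x i != 0 & x j != 0].
Proof.
move=> ns; case: (pselect (exists n, x n != 0)) => [[n xn]|none].
  case: (pselect (exists j, j != n /\ x j != 0)) => [[j [jn xj]]|noj].
    by exists n, j; rewrite eq_sym.
  exfalso; apply: ns; exists n, (x n); split => // k kn.
  case: (eqVneq (x k) 0) => // xk; exfalso; apply: noj; exists k; split => //.
  by apply/eqP.
exfalso; apply: ns; exists 0%N, (x 0%N); split => // k _.
by case: (eqVneq (x k) 0) => // xk; exfalso; apply: none; exists k.
Qed.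

Lemma perp_exists a : a != 0 -> dim_ge2 V -> exists u, u != 0 /\ ip u a = 0.
Proof.
move=> a0 [e1 [e2 ind]].
have qa : ip a a != 0 by apply/eqP => /ip_def /eqP; rewrite (negPf a0).
pose pr e := e - (ip e a / ip a a) *: a.
have prp e : ip (pr e) a = 0.
  by rewrite /pr -scaleNr ipDl ipZl mulNr divfK // subrr.
case: (eqVneq (pr e1) 0) => h1; last by exists (pr e1).
case: (eqVneq (pr e2) 0) => h2; last by exists (pr e2).
exfalso.
move: h1 h2; rewrite /pr; set c1 := ip e1 a / _; set c2 := ip e2 a / _.
move=> /eqP; rewrite subr_eq0 => /eqP E1 /eqP; rewrite subr_eq0 => /eqP E2.
have [c20 c10] : c2 = 0 /\ - c1 = 0.
  apply: ind; transitivity (c2 *: (c1 *: a) + - c1 *: (c2 *: a)); first by rewrite -E1 -E2.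
  by rewrite !scalerA mulNr scaleNr mulrC subrr.
have e10 : e1 = 0 by rewrite E1 -[c1]opprK c10 oppr0 scale0r.
have := ind 1 0; rewrite e10 scaler0 scale0r addr0 => /(_ erefl) [/eqP].
by rewrite oner_eq0.
Qed.

Lemma Nlt_pyth a u : a != 0 -> u != 0 -> ip u a = 0 -> N a < N (a + u).
Proof.
move=> a0 u0 ua; rewrite /ipnorm ltr_sqrt; last first.
  by rewrite Qpyth // (lt_le_trans (N_gt0_Q a0)) // lerDl ipQ_ge0.
by rewrite Qpyth // ltrDl -N_sqr exprn_gt0 // N_gt0.
Qed.

Lemma main_x (dim : dim_ge2 V) (x : nat -> V) : in_lp re ip p x ->
  (left_symmetric re ip p x <-> single_supported x) /\
  (right_symmetric re ip p x <-> single_supported x).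
Proof.
move=> hx; have cx : cvgn (series (tm x)) := hx.
case: (pselect (single_supported x)) => [ss|ns].
  have [n [h [xn xk]]] := ss.
  have xk' : forall k, k != n -> x k = 0 by move=> k /eqP; apply: xk.
  split; split => // _.
    by move=> y cy; apply: (left_A xk' xn cx cy).
  by move=> y cy; apply: (right_A xk' xn cx cy).
have [i [j [ij ai bj]]] := two_nonzero ns.
have [u [u0 ua]] := perp_exists ai dim.
have al0 : 0 < N (x i) := N_gt0 ai.
have be0 : 0 < N (x j) := N_gt0 bj.
have p2' : p - 2 != 0 by rewrite subr_eq0.
have ne : N (x i + u) `^ (p - 2) != N (x i) `^ (p - 2).
  by rewrite eq_sym; apply: powR_ne => //; apply: Nlt_pyth.
have va0 : ip 0 (x i) = 0 by rewrite ip0l.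
have pm1 : p - 1 != 0 by rewrite subr_eq0 gt_eqF.
split; split => // H; exfalso.
  pose D v := N (x i + v) `^ (p - 2) * N (x i) ^+ 2
   - (N (x i) `^ p / N (x j) `^ p * N (x j)) `^ (p - 2)
     * (N (x i) `^ p / N (x j) `^ p * N (x j) ^+ 2).
  case: (eqVneq (D 0) 0) => D0; last by apply: (left_fail ij ai bj cx va0 D0 H).
  apply: (left_fail ij ai bj cx ua _ H); rewrite -/(D u).
  apply/eqP => Du.
  have e : D u - D 0 = (N (x i + u) `^ (p - 2) - N (x i) `^ (p - 2)) * N (x i) ^+ 2.
    by rewrite /D addr0; ring.
  move: e; rewrite Du D0 subrr => /esym /eqP.
  by rewrite mulf_eq0 subr_eq0 (negPf ne) expf_eq0 /= gt_eqF.
pose X v := N (x i + v) `^ (p - 2) * N (x i) ^+ 2 / N (x j) `^ p.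
pose mu v := X v `^ (p - 1)^-1.
have X0 v : ip v (x i) = 0 -> 0 < X v.
  move=> va; rewrite /X divr_gt0 ?powR_gt0 // mulr_gt0 ?powR_gt0 ?exprn_gt0 //.
  exact: N_av_gt.
have mu0 v : ip v (x i) = 0 -> 0 < mu v by move=> va; rewrite /mu powR_gt0 // X0.
have hmu v : ip v (x i) = 0 ->
    mu v `^ (p - 1) * N (x j) `^ p = N (x i + v) `^ (p - 2) * N (x i) ^+ 2.
  move=> va; rewrite /mu -powRrM mulVf // powRr1; last exact: ltW (X0 v va).
  by rewrite /X divfK // gt_eqF // powR_gt0.
case: (eqVneq (N (x i) `^ p - mu 0 * N (x j) `^ p) 0) => D0; last first.
  by apply: (right_fail ij ai bj cx va0 (mu0 0 va0) (hmu 0 va0) D0 H).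
apply: (right_fail ij ai bj cx ua (mu0 u ua) (hmu u ua) _ H).
apply/eqP => Du.
have emu : mu u = mu 0.
  apply: (mulIf (negbT (gt_eqF (powR_gt0 p be0)))).
  by have := Du; rewrite -D0 => /addrI /oppr_inj.
have h1 := hmu u ua; have h2 := hmu 0 va0.
rewrite emu h2 addr0 in h1.
have al2 : N (x i) ^+ 2 != 0 by rewrite expf_eq0 /= gt_eqF.
by move: ne; rewrite (mulIf al2 h1) eqxx.
Qed.

End Abs.

Section Fin.
Variables (R : realType) (K : fieldType) (re : K -> R) (cj : K -> K) (emb : R -> K).
Hypothesis reD : forall a b, re (a + b) = re a + re b.
Hypothesis reM : forall r a, re (emb r * a) = r * re a.
Hypothesis re_emb : forall r, re (emb r) = r.
Hypothesis embD : forall r s, emb (r + s) = emb r + emb s.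
Hypothesis embM : forall r s, emb (r * s) = emb r * emb s.
Hypothesis emb1 : emb 1 = 1.
Hypothesis cjD : forall a b, cj (a + b) = cj a + cj b.
Hypothesis cjM : forall a b, cj (a * b) = cj a * cj b.
Hypothesis cj_emb : forall r, cj (emb r) = emb r.
Hypothesis reJ : forall a, re (cj a) = re a.
Hypothesis re_nn : forall a, 0 <= re (a * cj a).
Hypothesis re_eq0 : forall a, re (a * cj a) = 0 -> a = 0.
Hypothesis cj_real : forall a, cj a = a -> a = emb (re a).

Lemma cor_abs (V : lmodType K) : cor318_for re cj V.
Proof.
move=> ip [ipH _] dim p p1 p2 x hx.
exact: (main_x reD reM re_emb embD embM emb1 cjD cjM cj_emb reJ re_nn re_eq0 cj_real ipH p1 p2 dim hx).
Qed.
End Fin.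

Unset Implicit Arguments.
Local Close Scope classical_set_scope.

Theorem corollary3p18 (R : realType) :
  (forall V : lmodType R, cor318_for (@id R) (@id R) V) /\
  (forall V : lmodType (complex.complex R),
      cor318_for (@complex.Re R) (@complex.conjc R) V).
Proof.
split => V.
  apply: (@cor_abs R R id id id) => //.
  - by move=> a; rewrite /= -expr2 sqr_ge0.
  - by move=> a /= /eqP; rewrite mulf_eq0 orbb => /eqP.
apply: (@cor_abs R _ _ _ (fun r => (r%:C)%C)).
- by move=> [a1 a2] [b1 b2].
- by move=> r [a1 a2] /=; rewrite mul0r subr0.
- by [].
- by move=> r s; rewrite rmorphD.
- by move=> r s; rewrite rmorphM.
- by rewrite rmorph1.
- by move=> a b; rewrite rmorphD.
- by move=> a b; rewrite rmorphM.
- by move=> r; rewrite conjc_real.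
- by move=> [a1 a2].
- move=> [a1 a2] /=; nra.
- move=> [a1 a2] /= h.
  have h1 : a1 = 0 by nra.
  have h2 : a2 = 0 by nra.
  by rewrite h1 h2.
- move=> [a1 a2] [] h; rewrite /=.
  have -> : a2 = 0 by lra.
  by [].
Qed.
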